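(* In the Heisenberg–Weyl algebra $\mathcal A$, for all integers $0\le k\le n$ one has $q^{k}p^{n}q^{n-k} = p^{n-k}q^{n}p^{k}$.
   Context: $\mathcal{A}$ denotes the quotient of the free associative $\mathbb{C}$-algebra on two noncommuting generators $p,q$ by the two-sided ideal generated by $qp-pq-\imath$, where $\imath=\sqrt{-1}$. *)

(* Defs.v *)
From HB Require Import structures.
From mathcomp Require Import all_boot all_order all_algebra all_field.
Set Implicit Arguments. Unset Strict Implicit. Unset Printing Implicit Defensive.
Import Order.TTheory GRing.Theory Num.Theory.
Local Open Scope ring_scope.

Definition weyl_relation (A : algType algC) (p q : A) : Prop :=
  q * p - p * q = 'i%:A.

(* Main.v *)
Require Import Defs.
From HB Require Import structures.
From mathcomp Require Import all_boot all_order all_algebra all_field.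
Import Order.TTheory GRing.Theory Num.Theory.
Local Open Scope ring_scope.

Section W.
Variable (A : pzRingType) (p q c : A).
Hypothesis cc : forall y, c * y = y * c.
Hypothesis hqp : q * p = p * q + c.

Lemma ccn k y : c *+ k * y = y * c *+ k.
Proof. by rewrite mulrnAl cc. Qed.

Lemma Np : p * q * p = p * (p * q + c).
Proof. by rewrite -mulrA hqp. Qed.

Lemma Nq : p * q * q = q * (p * q - c).
Proof.
have: q * p * q = (p * q + c) * q by rewrite hqp.
rewrite mulrDl -mulrA cc => H.
by rewrite mulrBr H -addrA subrr addr0.
Qed.

Lemma Npk k : p * q * p ^+ k = p ^+ k * (p * q + c *+ k).
Proof.
elim: k => [|k IH]; first by rewrite expr0 mul1r mulr1 addr0.
rewrite exprSr mulrA IH -mulrA mulrDl Np ccn -mulrnAr -mulrDr.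
by rewrite mulrA mulrS addrA (addrAC _ c).
Qed.

Lemma Nqk k : p * q * q ^+ k = q ^+ k * (p * q - c *+ k).
Proof.
elim: k => [|k IH]; first by rewrite expr0 mul1r mulr1 subr0.
rewrite exprSr mulrA IH -mulrA mulrBl Nq ccn -mulrnAr -mulrBr.
by rewrite mulrA mulrS opprD addrA.
Qed.

Lemma pkN k : p ^+ k * (p * q) = (p * q - c *+ k) * p ^+ k.
Proof. by rewrite mulrBl Npk mulrDr ccn mulrnAr addrK. Qed.

Lemma acomm k : p * q * (q ^+ k * p ^+ k) = q ^+ k * p ^+ k * (p * q).
Proof.
rewrite mulrA Nqk -mulrA mulrBl Npk ccn -mulrnAr -mulrBr.
by rewrite addrK mulrA.
Qed.

Lemma bcomm x m : p * q * x = x * (p * q) ->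
  x * (p ^+ m * q ^+ m) = p ^+ m * q ^+ m * x.
Proof.
move=> Hx; elim: m => [|m IH]; first by rewrite !expr0 !mulr1 mul1r.
have ->: p ^+ m.+1 * q ^+ m.+1 = (p * q - c *+ m) * (p ^+ m * q ^+ m).
  by rewrite exprSr exprS -mulrA (mulrA p) (mulrA _ (p * q)) pkN -mulrA.
have Hx' : (p * q - c *+ m) * x = x * (p * q - c *+ m).
  by rewrite mulrBl mulrBr Hx ccn mulrnAr.
by rewrite mulrA -Hx' -mulrA IH mulrA.
Qed.
End W.

Theorem corollary2p6 (A : algType algC) (p q : A) (hpq : weyl_relation p q)
  (k n : nat) (hkn : (k <= n)%N) :
  q ^+ k * p ^+ n * q ^+ (n - k) = p ^+ (n - k) * q ^+ n * p ^+ k.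
Proof.
have cc : forall y : A, 'i%:A * y = y * 'i%:A by move=> y; rewrite mulr_algl mulr_algr.
have hqp : q * p = p * q + 'i%:A by rewrite -hpq addrC subrK.
have [m ->] : exists m, n = (k + m)%N by exists (n - k)%N; rewrite subnKC.
rewrite addKn.
have -> : q ^+ (k + m) = q ^+ m * q ^+ k by rewrite addnC exprD.
rewrite exprD.
have -> : q ^+ k * (p ^+ k * p ^+ m) * q ^+ m
        = (q ^+ k * p ^+ k) * (p ^+ m * q ^+ m) by rewrite !mulrA.
have -> : p ^+ m * (q ^+ m * q ^+ k) * p ^+ k
        = (p ^+ m * q ^+ m) * (q ^+ k * p ^+ k) by rewrite !mulrA.
apply: (@bcomm _ p q 'i%:A cc hqp).
exact: (@acomm _ p q 'i%:A cc hqp).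
Qed.
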